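(* Assume (C1). Then for every $\kappa\in[p,+\infty]$, $\mathcal{D}$ is continuously embedded into $l^\kappa(\mathbb{Z},\mathbb{R})$, with $$\|u\|_{l^\kappa}\le b_0^{-1/p}\|u\|\quad\text{for all }u\in\mathcal{D}.$$ Moreover, for every $\kappa\in[p,+\infty]$ the embedding $\mathcal{D}\hookrightarrow l^\kappa(\mathbb{Z},\mathbb{R})$ is compact.
   Context: Fix real numbers $p,q,r$ with $1<p<q$, $\frac p2$ a positive integer, and $r\ge1$, and functions $a,b,c:\mathbb{Z}\to(0,+\infty)$. (C1): there is $b_0>0$ with $b(n)\ge b_0$ for all $n\in\mathbb{Z}$ and $\lim_{|n|\to\infty}b(n)=+\infty$. Notation and spaces: - $\Delta u(n)=u(n+1)-u(n)$. - $E$ is the set of real sequences $u=(u(n))_{n\in\mathbb{Z}}$ with $\|u\|:=\big(\sum_{n\in\mathbb{Z}}[a(n)|\Delta u(n)|^p+b(n)|u(n)|^p]\big)^{1/p}<\infty$. - $\mathcal{D}=\{u\in E:\sum_n c(n)|u(n)|^q\ln|u(n)|^r<+\infty\}$, where terms with $u(n)=0$ are read as $0$. It carries the norm $\|\cdot\|$. - For $1\le\kappa<\infty$, $l^\kappa(\mathbb{Z},\mathbb{R})$ is the space of real sequences with $\|u\|_{l^\kappa}=(\sum_n|u(n)|^\kappa)^{1/\kappa}<\infty$. - $l^\infty(\mathbb{Z},\mathbb{R})$ is the space of real sequences with $\|u\|_{l^\infty}=\sup_n|u(n)|<\infty$. *)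

(* Defs.v *)
From HB Require Import structures.
From mathcomp Require Import all_boot all_order all_algebra.
From mathcomp Require Import all_classical all_reals all_analysis.
Set Implicit Arguments. Unset Strict Implicit. Unset Printing Implicit Defensive.
Import Order.TTheory GRing.Theory Num.Theory.
Local Open Scope classical_set_scope.
Local Open Scope ring_scope.

Section Spaces.
Variable R : realType.

Definition sumZ (f : int -> R) : \bar R := \esum_(n in [set: int]) (f n)%:E.

Definition normE_pow (a b : int -> R) (p : R) (u : int -> R) : \bar R :=
  sumZ (fun n => a n * powR `|u (n + 1) - u n| p + b n * powR `|u n| p).

Definition in_E (a b : int -> R) (p : R) (u : int -> R) : Prop :=
  (normE_pow a b p u < +oo)%E.

(* ||u|| = (sum ...)^(1/p) (meaningful for u in E) *)
Definition normE (a b : int -> R) (p : R) (u : int -> R) : R :=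
  powR (fine (normE_pow a b p u)) p^-1.

(* D: u in E with sum_n c(n)|u(n)|^q ln(|u(n)|^r) convergent (absolutely);
   terms with u(n) = 0 count as 0. *)
Definition logterm (c : int -> R) (q r : R) (u : int -> R) (n : int) : R :=
  if u n == 0 then 0 else c n * powR `|u n| q * ln (powR `|u n| r).

Definition in_D (a b c : int -> R) (p q r : R) (u : int -> R) : Prop :=
  in_E a b p u /\ (sumZ (fun n => `|logterm c q r u n|%R) < +oo)%E.

Definition in_l (kappa : \bar R) (u : int -> R) : Prop :=
  match kappa with
  | EFin k => (sumZ (fun n => powR `|u n|%R k) < +oo)%E
  | +oo%E => exists M : R, forall n, `|u n| <= M
  | -oo%E => False
  end.

Definition lnorm (kappa : \bar R) (u : int -> R) : R :=
  match kappa with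
  | EFin k => powR (fine (sumZ (fun n => powR `|u n| k))) k^-1
  | +oo%E => sup [set `|u n| | n in [set: int]]
  | -oo%E => 0
  end.

End Spaces.

(* Main.v *)
Require Import Defs.
From HB Require Import structures.
From mathcomp Require Import all_boot all_order all_algebra.
From mathcomp Require Import all_classical all_reals all_analysis.
From mathcomp Require Import zify ring lra.
Import Order.TTheory GRing.Theory Num.Theory.
Import numFieldNormedType.Exports.
Local Open Scope classical_set_scope.
Local Open Scope ring_scope.

Lemma incr_lt (g : nat -> nat) : (forall k, g k < g k.+1)%N ->
  forall k l, (k < l)%N -> (g k < g l)%N.
Proof.
move=> H k; elim=> // l IH; rewrite ltnS leq_eqVlt => /orP[/eqP->|/IH] //.
by move=> h; apply: ltn_trans h (H l).
Qed.

Lemma incr_ge (g : nat -> nat) : (forall k, g k < g k.+1)%N ->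
  forall k, (k <= g k)%N.
Proof.
move=> H; elim=> // k IH; exact: leq_ltn_trans IH (H k).
Qed.

Lemma diag (R : realType) (f : nat -> nat -> R) :
  (forall j, exists C : R, forall k, `|f k j| <= C) ->
  exists phi : nat -> nat, (forall k, (phi k < phi k.+1)%N) /\
    forall j, cvgn (fun k => f (phi k) j).
Proof.
move=> fb.
have TH : forall gj : (nat -> nat) * nat, exists th : nat -> nat,
    (forall k, (th k < th k.+1)%N) /\ cvgn (fun k => f (gj.1 (th k)) gj.2).
  move=> [g j] /=; have [C HC] := fb j.
  have bnd : bounded_fun (fun k => f (g k) j).
    exists C; split; first by rewrite num_real.
    by move=> x Cx y _; rewrite /= (le_trans (HC _))// ltW.
  have [th thi thc] := bolzano_weierstrass bnd.
  by exists th; split => //; move/increasing_seqP: thi => h k; exact: h k.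
have [Th HTh] := choice TH.
pose psi := fix psi j := match j with 0 => id | j'.+1 => psi j' \o Th (psi j', j') end.
have psiS j : psi j.+1 = psi j \o Th (psi j, j) by [].
have psi_incr j k : (psi j k < psi j k.+1)%N.
  elim: j k => [//|j IH] k; rewrite psiS /=.
  by apply: incr_lt => //; exact: (HTh (psi j, j)).1.
have reach d j k : exists m, (k <= m)%N /\ psi (j + d)%N k = psi j m.
  elim: d k => [|d IH] k; first by exists k; rewrite addn0.
  rewrite addnS psiS /=.
  have [m [km ->]] := IH (Th (psi (j + d)%N, (j + d)%N) k).
  exists m; split => //; apply: leq_trans km.
  exact: incr_ge (HTh _).1 k.
exists (fun k => psi k.+1 k); split.
  move=> k; have -> : psi k.+2 k.+1 = psi k.+1 (Th (psi k.+1, k.+1) k.+1) by [].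
  apply: incr_lt => //.
  exact: incr_ge (HTh _).1 k.+1.
move=> j; apply/cvg_ex.
have [Hi Hc] := HTh (psi j, j).
exists (lim ((fun k => f (psi j.+1 k) j) @ \oo)).
have : (fun k => f (psi j.+1 k) j) @ \oo --> lim ((fun k => f (psi j.+1 k) j) @ \oo).
  exact: Hc.
move=> /cvgrPdist_lt Hl; apply/cvgrPdist_lt => e e0.
have [N _ HN] := Hl e e0.
exists (N + j)%N => // k /= Hk.
have Ek : k.+1 = (j.+1 + (k - j))%N.
  rewrite addSn subnKC //; apply: leq_trans Hk; exact: leq_addl.
have [m [km Em]] := reach (k - j)%N j.+1 k.
change (`|lim ((fun k0 => f (psi j.+1 k0) j) @ \oo) - f (psi k.+1 k) j| < e); rewrite Ek Em; apply: HN => /=; apply: leq_trans km.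
apply: leq_trans Hk; exact: leq_addr.
Qed.

Set Implicit Arguments. Unset Strict Implicit.
Section Aux.
Variable R : realType.

Lemma term_le_sumZ (f : int -> R) n : (forall m, 0 <= f m) -> ((f n)%:E <= sumZ f)%E.
Proof.
move=> f0; rewrite /sumZ; apply: esum_ge; exists [set n].
  by split; [exact: finite_set1|].
by rewrite fsbig_set1.
Qed.

Lemma sumZ_ge0 (f : int -> R) : (forall m, 0 <= f m) -> (0 <= sumZ f)%E.
Proof. by move=> f0; apply: esum_ge0 => x _; rewrite lee_fin. Qed.

Lemma le_sumZ (f g : int -> R) : (forall m, f m <= g m) -> (sumZ f <= sumZ g)%E.
Proof. by move=> fg; apply: le_esum => i _; rewrite lee_fin. Qed.

Lemma esumZ_le (I : set int) (c : R) (f : int -> \bar R) : 0 <= c ->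
  (forall i, (0 <= f i)%E) ->
  (\esum_(i in I) (c%:E * f i)%E <= c%:E * \esum_(i in I) f i)%E.
Proof.
move=> c0 f0; apply: ge_ereal_sup => _ [X [finX XI] <-].
rewrite -ge0_mule_fsumr //; apply: lee_wpmul2l; first by rewrite lee_fin.
by apply: ereal_sup_ubound; exists X.
Qed.

Lemma sumZ_scale_le (c : R) (f : int -> R) : 0 <= c -> (forall i, 0 <= f i) ->
  (sumZ (fun n => (c * f n)%R) <= (c%:E * sumZ f)%E)%E.
Proof.
move=> c0 f0; rewrite /sumZ.
under eq_esum do rewrite EFinM.
by apply: esumZ_le => // i; rewrite lee_fin.
Qed.

Lemma fin_sumZ (f : int -> R) : (forall m, 0 <= f m) -> (sumZ f < +oo)%E ->
  sumZ f = (fine (sumZ f))%:E.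
Proof. by move=> f0 h; rewrite fineK // ge0_fin_numE // sumZ_ge0. Qed.

Lemma lnorm_le (p : R) (u : int -> R) (kappa : \bar R) : 0 < p ->
  (p%:E <= kappa)%E -> (sumZ (fun n => powR `|u n| p) < +oo)%E ->
  in_l kappa u /\ lnorm kappa u <= powR (fine (sumZ (fun n => powR `|u n| p))) p^-1.
Proof.
move=> p0 pk Tfin.
set T := sumZ _ in Tfin *.
have f0 : forall m, 0 <= powR `|u m| p by move=> m; exact: powR_ge0.
have TE := fin_sumZ f0 Tfin; rewrite -/T in TE.
set t := fine T in TE *.
have t0 : 0 <= t by rewrite -lee_fin -TE sumZ_ge0.
set y := powR t p^-1.
have y0 : 0 <= y by exact: powR_ge0.
have ub n : `|u n| <= y.
  have h : powR `|u n| p <= t by rewrite -lee_fin -TE; exact: term_le_sumZ.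
  have := @ge0_ler_powR R p^-1 _ _ _ _ _ h.
  rewrite -powRrM mulfV ?gt_eqF // powRr1 //; apply.
  - by rewrite invr_ge0 ltW.
  - by rewrite nnegrE powR_ge0.
  - by rewrite nnegrE.
have ty : t = powR y p by rewrite /y -powRrM mulVf ?gt_eqF // powRr1.
case: kappa pk => [k pk| pk| pk]; last first.
- by move: pk; rewrite leeNy_eq.
- split; first by exists y.
  apply: ge_sup; first by exists `|u 0|; exists 0.
  by move=> _ [n _ <-]; exact: ub.
move: pk; rewrite lee_fin => pk.
have k0 : 0 < k by exact: lt_le_trans pk.
set c := powR y (k - p).
have c0 : 0 <= c by exact: powR_ge0.
have pt n : powR `|u n| k <= c * powR `|u n| p.
  have -> : k = (k - p) + p by rewrite subrK.
  rewrite powRD; last by rewrite subrK gt_eqF.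
  apply: ler_wpM2r; first exact: powR_ge0.
  apply: ge0_ler_powR; rewrite ?nnegrE ?subr_ge0 //; exact: ub.
have Sle : (sumZ (fun n => powR `|u n| k) <= (c * t)%:E)%E.
  apply: le_trans (le_sumZ pt) _.
  apply: le_trans (sumZ_scale_le c0 f0) _.
  by rewrite -/T TE -EFinM.
have Sfin : (sumZ (fun n => powR `|u n| k) < +oo)%E.
  by apply: le_lt_trans Sle _; exact: ltry.
split; first exact: Sfin.
rewrite /lnorm.
have SE := fin_sumZ (fun m => powR_ge0 _ _) Sfin.
have ct : c * t = powR y k.
  rewrite ty /c -powRD; first by rewrite subrK.
  by rewrite subrK gt_eqF.
apply: le_trans (_ : powR (c * t) k^-1 <= _).
  apply: ge0_ler_powR.
  - by rewrite invr_ge0 ltW.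
  - by rewrite nnegrE fine_ge0 // sumZ_ge0.
  - by rewrite nnegrE mulr_ge0.
  by rewrite -lee_fin -SE.
by rewrite ct -powRrM mulfV ?gt_eqF // powRr1.
Qed.

End Aux.

Section Aux2.
Variable R : realType.

Lemma sumZD (f g : int -> R) : (forall n, 0 <= f n) -> (forall n, 0 <= g n) ->
  sumZ (fun n => f n + g n) = (sumZ f + sumZ g)%E.
Proof.
move=> f0 g0; rewrite /sumZ; under eq_esum do rewrite EFinD.
by apply: esumD => i _; rewrite lee_fin.
Qed.

Lemma Tbound (p b0 : R) (u g : int -> R) : 0 < b0 -> (forall n, 0 <= g n) ->
  (forall n, b0 * powR `|u n| p <= g n) ->
  (sumZ (fun n => powR `|u n| p) <= ((b0^-1)%:E * sumZ g)%E)%E.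
Proof.
move=> b00 g0 hg.
apply: le_trans (sumZ_scale_le (f := g) _ g0); last by rewrite invr_ge0 ltW.
apply: le_sumZ => n.
rewrite -[X in X <= _](mulKf (negbT (gt_eqF b00))); apply: ler_wpM2l; last exact: hg.
by rewrite invr_ge0 ltW.
Qed.

Lemma lnorm_ge0 (kappa : \bar R) (u : int -> R) : in_l kappa u -> 0 <= lnorm kappa u.
Proof.
case: kappa => [k| |] //= h; first exact: powR_ge0.
case: h => M hM; apply: le_trans (normr_ge0 (u 0)) _.
apply: ub_le_sup; last by exists 0.
by exists M => _ [n _ <-]; exact: hM.
Qed.

Lemma powR_inv_eq (b0 r : R) : 0 < b0 -> powR (b0^-1) r = (powR b0 r)^-1.
Proof.
move=> b00.
have h : powR (b0^-1) r * powR b0 r = 1.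
  by rewrite -powRM ?invr_ge0 ?ltW // mulVf ?gt_eqF // powR1.
have hn : powR b0 r != 0 by rewrite gt_eqF // powR_gt0.
by rewrite -[LHS]mulr1 -(mulfV hn) mulrA h mul1r.
Qed.

Lemma part1 (p : R) (a b : int -> R) (b0 : R) (u : int -> R) (kappa : \bar R) :
  0 < p -> 0 < b0 -> (forall n, b0 <= b n) -> (forall n, 0 < a n) ->
  (p%:E <= kappa)%E -> in_E a b p u ->
  in_l kappa u /\ lnorm kappa u <= powR b0 (- p^-1) * normE a b p u.
Proof.
move=> p0 b00 hbb0 ha pk hE.
pose g n := a n * powR `|u (n + 1) - u n| p + b n * powR `|u n| p.
have g0 n : 0 <= g n.
  by rewrite addr_ge0 // mulr_ge0 ?powR_ge0 // ltW // (lt_le_trans b00).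
have hg n : b0 * powR `|u n| p <= g n.
  rewrite /g -[X in X <= _]add0r; apply: lerD.
    by rewrite mulr_ge0 ?powR_ge0 // ltW.
  by apply: ler_wpM2r; [exact: powR_ge0|].
have HT := Tbound b00 g0 hg.
have Sfin : (sumZ g < +oo)%E by exact: hE.
have SE := fin_sumZ g0 Sfin.
have Tfin : (sumZ (fun n => powR `|u n| p) < +oo)%E.
  by apply: le_lt_trans HT _; rewrite SE -EFinM ltry.
have [hl hn] := lnorm_le p0 pk Tfin.
split => //; apply: le_trans hn _.
have TE := fin_sumZ (fun m => powR_ge0 `|u m| p) Tfin.
set t := fine (sumZ (fun m => powR `|u m| p)) in TE *.
set S := fine (sumZ g) in SE *.
have HT' : t <= b0^-1 * S by move: HT; rewrite TE SE -EFinM lee_fin.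
have t0 : 0 <= t by rewrite -lee_fin -TE; apply: sumZ_ge0 => m; exact: powR_ge0.
have S0 : 0 <= S by rewrite -lee_fin -SE; apply: sumZ_ge0.
rewrite /normE; change (fine (normE_pow a b p u)) with S.
apply: le_trans (_ : _ <= powR (b0^-1 * S) p^-1) _.
  apply: ge0_ler_powR => //; rewrite ?nnegrE //.
  all: try by rewrite invr_ge0 ltW.
  all: try by rewrite mulr_ge0 // invr_ge0 ltW.
have ib : 0 <= b0^-1 by rewrite invr_ge0 ltW.
rewrite (powRM _ ib S0).
by rewrite powR_inv_eq // powRN.
Qed.

Lemma cvg_powR_norm (p : R) (n0 : nat) (x_ : nat -> R) l : p = n0%:R ->
  x_ @ \oo --> l -> (fun k => powR `|x_ k| p) @ \oo --> powR `|l| p.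
Proof.
move=> -> h; rewrite powR_mulrn //.
under eq_fun do rewrite powR_mulrn //.
apply: (@continuous_cvg _ _ _ _ _ (fun k => `|x_ k|) (fun x : R => x ^+ n0)); first exact: exprn_continuous.
exact: cvg_norm.
Qed.

Lemma cvg_seqsum (r : seq int) (f : nat -> int -> R) (g : int -> R) :
  (forall i, (fun k => f k i) @ \oo --> g i) ->
  (fun k => \sum_(i <- r) f k i) @ \oo --> \sum_(i <- r) g i.
Proof.
move=> h; elim: r => [|i r IH].
  rewrite big_nil; under eq_fun do rewrite big_nil; exact: cvg_cst.
rewrite big_cons; under eq_fun do rewrite big_cons.
exact: cvgD.
Qed.

Lemma pw_bound (p x y : R) : 0 < p ->
  powR `|x - y| p <= powR 2 p * (powR `|x| p + powR `|y| p).
Proof.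
move=> p0.
have c0 : 0 <= powR 2 p by exact: powR_ge0.
have hxy : `|x - y| <= `|x| + `|y| by exact: ler_normB.
have gen : forall z : R, `|x - y| <= 2 * `|z| ->
    powR `|x - y| p <= powR 2 p * powR `|z| p.
  move=> z hz; rewrite -powRM //; apply: ge0_ler_powR => //; rewrite ?nnegrE //.
  all: try exact: ltW.
case: (leP `|x| `|y|) => h.
  apply: le_trans (gen y _) _; first by rewrite mulr2n mulrDl mul1r; lra.
  by apply: ler_wpM2l => //; rewrite lerDr powR_ge0.
apply: le_trans (gen x _) _; first by rewrite mulr2n mulrDl mul1r; lra.
by apply: ler_wpM2l => //; rewrite lerDl powR_ge0.
Qed.

End Aux2.

Section P2.
Variable R : realType.

Definition enumZ (j : nat) : int :=
  if odd j then - (j./2.+1)%:Z else (j./2)%:Z.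

Lemma enumZ_surj (n : int) : exists j, enumZ j = n.
Proof.
case: n => k.
  by exists k.*2; rewrite /enumZ odd_double doubleK.
exists k.*2.+1; rewrite /enumZ /= odd_double /= uphalf_double NegzE //.
Qed.

Lemma part2 (n0 : nat) (p : R) (a b : int -> R) (b0 : R) (kappa : \bar R)
  (s : nat -> int -> R) :
  p = n0%:R -> (0 < n0)%N -> 0 < b0 -> (forall n, b0 <= b n) -> (forall n, 0 < a n) ->
  (forall M : R, exists N : nat, forall n : int, (N%:Z <= `|n|)%R -> M <= b n) ->
  (p%:E <= kappa)%E -> (forall k, in_E a b p (s k)) ->
  (exists M : R, forall k, normE a b p (s k) <= M) ->
  exists phi : nat -> nat, (forall k, (phi k < phi k.+1)%N) /\
    exists v : int -> R, in_l kappa v /\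
      (fun k => lnorm kappa (s (phi k) - v)) @ \oo --> 0.
Proof.
move=> pE n0p b00 hbb0 ha hbinf pk Hs [M HM].
have p0 : 0 < p by rewrite pE ltr0n.
have bpos n : 0 < b n := lt_le_trans b00 (hbb0 n).
pose g k n := a n * powR `|s k (n + 1) - s k n| p + b n * powR `|s k n| p.
have g0 k n : 0 <= g k n by rewrite addr_ge0 // mulr_ge0 ?powR_ge0 // ltW.
have M0 : 0 <= M by apply: le_trans (HM 0); exact: powR_ge0.
pose K := powR M p.
have K0 : 0 <= K by exact: powR_ge0.
have HK k : (sumZ (g k) <= K%:E)%E.
  have SE := fin_sumZ (g0 k) (Hs k).
  set S := fine (sumZ (g k)) in SE *.
  have S0 : 0 <= S by rewrite -lee_fin -SE; apply: sumZ_ge0.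
  rewrite SE lee_fin.
  have h : powR S p^-1 <= M by exact: HM k.
  have := @ge0_ler_powR R p (ltW p0) _ _ _ _ h.
  rewrite -powRrM mulVf ?gt_eqF // powRr1 //; apply; rewrite ?nnegrE //.
  exact: powR_ge0.
have Hbs k : (sumZ (fun n => (b n * powR `|s k n| p)%R) <= K%:E)%E.
  apply: le_trans (HK k); apply: le_sumZ => n.
  by rewrite /g lerDr mulr_ge0 ?powR_ge0 // ltW.
pose C := powR b0 (- p^-1) * M.
have bound (k : nat) (n : int) : `|s k n| <= C.
  have [hl hn] := part1 (kappa := +oo%E) (u := s k) p0 b00 hbb0 ha (leey _) (Hs k).
  apply: le_trans _ (le_trans hn _); last first.
    by apply: ler_wpM2l; [exact: powR_ge0| exact: HM].
  case: hl => B hB; apply: ub_le_sup; last by exists n.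
  by exists B => _ [m _ <-]; exact: hB.
have [phi [phii phic]] := @diag R (fun k j => s k (enumZ j))
  (fun j => ex_intro _ C (fun k => bound k (enumZ j))).
have cv n : cvgn (fun k => s (phi k) n).
  by have [j <-] := enumZ_surj n; exact: phic j.
pose v n := lim ((fun k => s (phi k) n) @ \oo).
have Hv n : (fun k => s (phi k) n) @ \oo --> v n by exact: cv n.
exists phi; split => //; exists v.
have Hbv : (sumZ (fun n => (b n * powR `|v n| p)%R) <= K%:E)%E.
  rewrite /sumZ /esum; apply: ge_ereal_sup => _ [X [finX _] <-].
  rewrite fsumEFin // lee_fin.
  have cX : (fun k => \sum_(i \in X) b i * powR `|s (phi k) i| p) @ \oo -->
      \sum_(i \in X) b i * powR `|v i| p.
    rewrite fsbig_finite //; under eq_fun do rewrite fsbig_finite //.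
    apply: cvg_seqsum => i; apply: cvgMl_tmp; exact: cvg_powR_norm pE (Hv i).
  have each k : \sum_(i \in X) b i * powR `|s (phi k) i| p <= K.
    rewrite -lee_fin -fsumEFin //; apply: le_trans (Hbs (phi k)).
    by apply: esum_ge; exists X => //; split.
  rewrite -(norm_cvg_lim cX); apply: limr_le; first exact: cvgP cX.
  by apply: nearW => k; exact: each k.
have Tv : (sumZ (fun n => powR `|v n| p) <= ((b0^-1)%:E * K%:E)%E)%E.
  apply: le_trans (Tbound (g := fun n => b n * powR `|v n| p) b00 _ _) _.
  - by move=> n; rewrite mulr_ge0 ?powR_ge0 //; apply: ltW.
  - by move=> n; apply: ler_wpM2r; [exact: powR_ge0|].
  - by apply: lee_wpmul2l; [rewrite lee_fin invr_ge0; apply: ltW| exact: Hbv].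
have vfin : (sumZ (fun n => powR `|v n| p) < +oo)%E.
  by apply: le_lt_trans Tv _; rewrite -EFinM ltry.
split; first exact: (lnorm_le p0 pk vfin).1.
have Tw : forall e : R, 0 < e -> \forall k \near \oo,
    (sumZ (fun n => powR `|(s (phi k) n - v n)%R| p) <= e%:E)%E.
  move=> e e0.
  pose cst := powR 2 p.
  have cst0 : 0 < cst by rewrite powR_gt0.
  pose B := 4 * cst * K / e + 1.
  have B0 : 0 < B.
    have : 0 <= 4 * cst * K / e by rewrite divr_ge0 ?mulr_ge0 //; apply: ltW.
    rewrite /B; set q := 4 * cst * K / e; lra.
  have [N HN] := hbinf B.
  pose F := [set n : int | `|n| < N%:Z].
  have finF : finite_set F.
    apply: (sub_finite_set (B := (fun j : nat => j%:Z - N%:Z) @` `I_(N + N)));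
      last exact/finite_image/finite_II.
    move=> n hn; have hn' : `|n| < N%:Z := hn; exists (absz (n + N%:Z)); rewrite /=; lia.
  have splitk k : (sumZ (fun n => powR `|(s (phi k) n - v n)%R| p) <=
      (\sum_(n \in F) powR `|s (phi k) n - v n| p)%:E + (cst / B * (K + K))%:E)%E.
    set h := fun n => powR `|s (phi k) n - v n| p.
    have h0 n : 0 <= h n by exact: powR_ge0.
    pose h1 n := if n \in F then h n else 0.
    pose h2 n := if n \in F then 0 else h n.
    have h10 n : 0 <= h1 n by rewrite /h1; case: ifP.
    have h20 n : 0 <= h2 n by rewrite /h2; case: ifP.
    have -> : sumZ h = (sumZ h1 + sumZ h2)%E.
      rewrite -sumZD //; congr sumZ; apply: funext => n.
      by rewrite /h1 /h2; case: ifP => _; rewrite ?addr0 ?add0r.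
    apply: leeD.
      have -> : sumZ h1 = \esum_(n in F) (h n)%:E.
        rewrite /sumZ [RHS]esum_mkcond; apply: eq_esum => n _.
        by rewrite /h1; case: ifP.
      rewrite esum_fset // ?fsumEFin //.
      by move=> n _; rewrite lee_fin.
    apply: le_trans (le_sumZ (g := fun n => cst / B *
        (b n * powR `|s (phi k) n| p + b n * powR `|v n| p)) _) _.
      move=> n; rewrite /h2; case: ifPn => hn.
        apply: mulr_ge0; first by rewrite divr_ge0 //; apply: ltW.
        by apply: addr_ge0; apply: mulr_ge0; rewrite ?powR_ge0 //; apply: ltW.
      have bn : B <= b n.
        apply: HN; move/negP: hn; rewrite in_setE => hn.
        have hn' : ~ (`|n| < N%:Z) := hn; lia.
      apply: le_trans (pw_bound _ _ p0) _.
      rewrite -mulrDr mulrA; apply: ler_wpM2r.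
        by rewrite addr_ge0 // powR_ge0.
      rewrite mulrAC ler_pdivlMr //; apply: ler_wpM2l => //; exact: ltW.
    have cB : 0 <= cst / B by rewrite divr_ge0 //; apply: ltW.
    apply: le_trans (sumZ_scale_le cB _) _.
      by move=> n; rewrite addr_ge0 // mulr_ge0 ?powR_ge0 //; apply: ltW.
    rewrite sumZD; last first.
    - by move=> n; rewrite mulr_ge0 ?powR_ge0 //; apply: ltW.
    - by move=> n; rewrite mulr_ge0 ?powR_ge0 //; apply: ltW.
    rewrite [X in (_ <= X)%E]EFinM; apply: lee_wpmul2l; first by rewrite lee_fin.
    by rewrite EFinD; apply: leeD; [exact: Hbs | exact: Hbv].
  have fc : (fun k => \sum_(n \in F) powR `|s (phi k) n - v n| p) @ \oo --> 0.
    suff : (fun k => \sum_(n \in F) powR `|s (phi k) n - v n| p) @ \oo -->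
        \sum_(n \in F) powR `|v n - v n| p.
      rewrite fsbig1 // => i _; rewrite subrr normr0 powR0 //; exact: lt0r_neq0.
    rewrite !fsbig_finite //; under eq_fun do rewrite fsbig_finite //.
    apply: cvg_seqsum => i; apply: cvg_powR_norm pE _; apply: cvgB => //.
    exact: cvg_cst.
  have hB : cst / B * (K + K) <= e / 2.
    have eB : e / 2 * B = cst * (K + K) + e / 2.
      rewrite /B; field; exact: lt0r_neq0.
    rewrite mulrAC ler_pdivrMr // eB lerDl; apply: ltW; exact: divr_gt0 e0 (ltr0Sn _ 1).
  move/cvgrPdist_le: fc => /(_ (e / 2) (divr_gt0 e0 (ltr0Sn _ 1))).
  apply: filterS => k hk.
  apply: le_trans (splitk k) _; rewrite -EFinD lee_fin.
  move: hk; rewrite sub0r normrN => hk.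
  have hs := le_trans (ler_norm _) hk.
  move: hs hB; set x1 := \sum_(n \in F) _; set x2 := cst / B * _; lra.
apply/cvgrPdist_le => eps eps0.
have ep : 0 < powR eps p by rewrite powR_gt0.
have := Tw (powR eps p) ep; apply: filterS => k hk.
have Tfin : (sumZ (fun n => powR `|((s (phi k) - v) n)%R| p) < +oo)%E.
  by apply: le_lt_trans hk _; exact: ltry.
have [hl hn] := lnorm_le p0 pk Tfin.
rewrite sub0r normrN ger0_norm; last exact: lnorm_ge0 hl.
apply: le_trans hn _.
have TE := fin_sumZ (fun m => powR_ge0 `|(s (phi k) - v) m| p) Tfin.
set t := fine _ in TE *.
have ht : t <= powR eps p by rewrite -lee_fin -TE.
have := @ge0_ler_powR R p^-1 _ _ _ _ _ ht.
rewrite -powRrM mulfV ?gt_eqF // powRr1; last exact: ltW.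
apply.
- by rewrite invr_ge0; apply: ltW.
- by rewrite nnegrE -lee_fin -TE; apply: sumZ_ge0 => m; exact: powR_ge0.
- by rewrite nnegrE powR_ge0.
Qed.
End P2.

Unset Implicit Arguments. Set Strict Implicit.

Theorem lemma2p1 (R : realType) (p q r : R) (a b c : int -> R) (b0 : R)
  (hp1 : 1 < p) (hpq : p < q)
  (hp2 : exists m : nat, (0 < m)%N /\ p / 2 = m%:R)
  (hr : 1 <= r)
  (ha : forall n, 0 < a n) (hb : forall n, 0 < b n) (hc : forall n, 0 < c n)
  (* (C1) *)
  (hb0 : 0 < b0) (hbb0 : forall n, b0 <= b n)
  (hbinf : forall M : R, exists N : nat, forall n : int,
      (N%:Z <= `|n|)%R -> M <= b n) :
  forall kappa : \bar R, (p%:E <= kappa)%E ->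
    (forall u : int -> R, in_D a b c p q r u ->
       in_l kappa u /\ lnorm kappa u <= powR b0 (- p^-1) * normE a b p u)
    /\
    (forall s : nat -> int -> R,
       (forall k, in_D a b c p q r (s k)) ->
       (exists M : R, forall k, normE a b p (s k) <= M) ->
       exists phi : nat -> nat, (forall k, (phi k < phi k.+1)%N) /\
         exists v : int -> R, in_l kappa v /\
           (fun k => lnorm kappa (s (phi k) - v)) @ \oo --> 0).
Proof.
move=> kappa pk.
have p0 : 0 < p by apply: lt_trans hp1; exact: ltr01.
have [m [m0 hm]] := hp2.
have pE : p = (m * 2)%N%:R.
  by rewrite natrM -hm mulfVK // pnatr_eq0.
split.
  by move=> u [hE _]; exact: part1 p0 hb0 hbb0 ha pk hE.
move=> s Hs HM; apply: (part2 pE _ hb0 hbb0 ha hbinf pk _ HM).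
  by rewrite muln_gt0 m0.
by move=> k; exact: (Hs k).1.
Qed.
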